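(* Let $\langle\mathcal U,\mathcal S,k\rangle$ be an instance of Set Cover as in the context and $D_{SC}$ the associated digraph with functions $F,B$. If there exists a set cover of size $k$ (a $k$-element subfamily of $\mathcal S$ whose union is $\mathcal U$), then the ST problem for $(D_{SC},F,B)$ has a positive answer.
   Context: Snow Team problem (ST): given a digraph $D=(\mathcal V,\mathcal A)$ whose underlying graph is connected, and $F:\mathcal V\to\{0,1\}$, $B:\mathcal V\to\mathbb N$, with $\mathbf k_B=\sum_vB(v)$: do there exist $\mathbf k_B$ directed walks, exactly $B(v)$ of which start at each $v$, such that, letting $H$ be the subgraph consisting of the vertices and arcs of these walks, all vertices of $F^{-1}(1)$ lie in one connected component of the underlying undirected graph of $H$? Such walks form a solution. Construction: $\mathcal U=\{1,\dots,n\}$, $\mathcal S=\{S_1,\dots,S_m\}$ with $S_t\subseteq\mathcal U$, $\bigcup_tS_t=\mathcal U$, and $1\le k\le m$. Write $S_t=\{x_1<\dots<x_{\ell(t)}\}$ and $I_i=\{j: i\in S_j\}$. The digraph $D_{SC}$ has vertices $u_i$ ($i\in\mathcal U$); $u_{i,j},u'_{i,j},v_{i,j},v'_{i,j}$ ($i\in\mathcal U$, $j\in I_i$); and $z,z_1,\dots,z_k$. Its arcs are those of the vertical paths $P_{i,j}=(u_{i,j},u_i,u'_{i,j},v_{i,j},v'_{i,j})$ ($i\in\mathcal U,j\in I_i$), of the horizontal paths $P^h_t=(z,v_{x_1,t},v_{x_2,t},\dots,v_{x_{\ell(t)},t})$ ($t\in\{1,\dots,m\}$, with $x_1<\dots<x_{\ell(t)}$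 the elements of $S_t$), and the arcs $(z_l,z)$ for $l=1,\dots,k$. The $i$-th element component $C_i$ is the subgraph induced by $\bigcup_{j\in I_i}V(P_{i,j})$. Set $F(v)=1$ for all vertices $v$, and $B(v)=1$ if $v$ is a source of $D_{SC}$ (i.e. $v\in\{u_{i,j}\}\cup\{z_1,\dots,z_k\}$) and $B(v)=0$ otherwise. *)

(* Defs.v *)
From Stdlib Require Import Arith List Relations Bool.
Import ListNotations.
Open Scope bool_scope.

Section ST.
Variable V : Type.
Variable vert : V -> Prop.
Variable arc : V -> V -> Prop.

Inductive is_walk : list V -> Prop :=
| walk_one x : vert x -> is_walk [x]
| walk_cons x y l : arc x y -> is_walk (y :: l) -> is_walk (x :: y :: l).

Variable F : V -> bool.
Variable B : V -> nat.

(* A family of walks: W v r is the r-th walk starting at v, for r < B v.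
   H = subgraph of vertices and arcs of these walks. *)
Definition inH (W : V -> nat -> list V) (x : V) : Prop :=
  exists v r, vert v /\ r < B v /\ In x (W v r).

Definition arcH (W : V -> nat -> list V) (x y : V) : Prop :=
  exists v r, vert v /\ r < B v /\ exists l1 l2, W v r = l1 ++ x :: y :: l2.

Definition ST_solution (W : V -> nat -> list V) : Prop :=
  (forall v r, vert v -> r < B v -> is_walk (W v r) /\ hd_error (W v r) = Some v) /\
  (forall x, vert x -> F x = true -> inH W x) /\
  (forall x y, vert x -> vert y -> F x = true -> F y = true ->
     clos_refl_trans V (fun a b => arcH W a b \/ arcH W b a) x y).

Definition ST_positive : Prop := exists W, ST_solution W.
End ST.

(* S t i = true  iff  i is an element of S_t. *)
Inductive VSC : Type :=
| vU   (i : nat)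
| vUij (i j : nat)
| vUp  (i j : nat)
| vV   (i j : nat)
| vVp  (i j : nat)
| vZ
| vZl  (l : nat).

Section DSC.
Variables (n m k : nat) (S : nat -> nat -> bool).

Definition inI (i j : nat) : Prop := 1 <= i <= n /\ 1 <= j <= m /\ S j i = true.

Definition vertSC (v : VSC) : Prop :=
  match v with
  | vU i => 1 <= i <= n
  | vUij i j | vUp i j | vV i j | vVp i j => inI i j
  | vZ => True
  | vZl l => 1 <= l <= k
  end.

Definition firstS (t x : nat) : Prop :=
  S t x = true /\ forall y, y < x -> S t y = false.
Definition nextS (t x y : nat) : Prop :=
  x < y /\ S t x = true /\ S t y = true /\ forall w, x < w < y -> S t w = false.

Definition arcSC (a b : VSC) : Prop :=
  match a, b with
  | vUij i j, vU i' => inI i j /\ i' = i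
  | vU i, vUp i' j => inI i' j /\ i' = i
  | vUp i j, vV i' j' => inI i j /\ i' = i /\ j' = j
  | vV i j, vVp i' j' => inI i j /\ i' = i /\ j' = j
  | vZ, vV x t => 1 <= t <= m /\ firstS t x
  | vV x t, vV y t' => t' = t /\ 1 <= t <= m /\ nextS t x y
  | vZl l, vZ => 1 <= l <= k
  | _, _ => False
  end.

Definition FSC (v : VSC) : bool := true.

Definition BSC (v : VSC) : nat :=
  match v with
  | vUij i j => if (1 <=? i) && (i <=? n) && (1 <=? j) && (j <=? m) && S j i then 1 else 0
  | vZl l => if (1 <=? l) && (l <=? k) then 1 else 0
  | _ => 0
  end.
End DSC.

Definition SC_instance (n m k : nat) (S : nat -> nat -> bool) : Prop :=
  (forall t i, 1 <= t <= m -> S t i = true -> 1 <= i <= n) /\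
  (forall i, 1 <= i <= n -> exists t, 1 <= t <= m /\ S t i = true) /\
  1 <= k <= m.

Definition set_cover_of_size (n m k : nat) (S : nat -> nat -> bool) : Prop :=
  exists C : list nat, NoDup C /\ length C = k /\
    (forall t, In t C -> 1 <= t <= m) /\
    (forall i, 1 <= i <= n -> exists t, In t C /\ S t i = true).

(* Main.v *)
Require Import Defs.
From Stdlib Require Import Arith List Relations Lia.
Import ListNotations.

Definition Wf (n : nat) (S : nat->nat->bool) (C : list nat) (v : VSC) (r : nat) : list VSC :=
 match v with
 | vUij i j => [vUij i j; vU i; vUp i j; vV i j; vVp i j]
 | vZl l => vZl l :: vZ :: map (fun x => vV x (nth (l-1) C 0)) (filter (S (nth (l-1) C 0)) (seq 1 n))
 | _ => [v]
 end.

Section Pf.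
Variables (n m k : nat) (S : nat -> nat -> bool).
Hypothesis HSC : SC_instance n m k S.

Lemma walkV t : 1 <= t <= m -> forall b a x, S t x = true -> x < a ->
  (forall w, x < w < a -> S t w = false) ->
  is_walk VSC (vertSC n m k S) (arcSC n m k S)
   (vV x t :: map (fun y => vV y t) (filter (S t) (seq a b))).
Proof.
  destruct HSC as [H1 _]. intros Ht b. induction b as [|b IH]; intros a x Hx Hxa Hg.
  - simpl. constructor. simpl. unfold inI. specialize (H1 t x Ht Hx). repeat split; lia || auto.
  - simpl. destruct (S t a) eqn:E.
    + simpl. constructor.
      * simpl. repeat split; auto; lia.
      * apply IH; auto. lia.
    + apply IH; auto. intros w Hw. destruct (Nat.eq_dec w a). subst; auto. apply Hg; lia.
Qed.

Lemma walkZ t : 1 <= t <= m -> forall b a,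
  (forall w, w < a -> S t w = false) ->
  is_walk VSC (vertSC n m k S) (arcSC n m k S)
   (vZ :: map (fun y => vV y t) (filter (S t) (seq a b))).
Proof.
  intros Ht b. induction b as [|b IH]; intros a Hg.
  - simpl. constructor. simpl. auto.
  - simpl. destruct (S t a) eqn:E.
    + simpl. constructor.
      * simpl. split; auto. split; auto.
      * apply walkV; auto. intros w Hw; lia.
    + apply IH. intros w Hw. destruct (Nat.eq_dec w a). subst; auto. apply Hg; lia.
Qed.

Lemma B_uij i j : inI n m S i j -> BSC n m k S (vUij i j) = 1.
Proof.
  intros [[a b] [[c d] e]]. unfold BSC.
  rewrite (proj2 (Nat.leb_le 1 i) a), (proj2 (Nat.leb_le i n) b),
    (proj2 (Nat.leb_le 1 j) c), (proj2 (Nat.leb_le j m) d), e. reflexivity.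
Qed.

Lemma B_zl l : 1 <= l <= k -> BSC n m k S (vZl l) = 1.
Proof.
  intros [a b]. unfold BSC.
  rewrite (proj2 (Nat.leb_le 1 l) a), (proj2 (Nat.leb_le l k) b). reflexivity.
Qed.

Lemma B_pos v r : r < BSC n m k S v ->
  (exists i j, v = vUij i j /\ inI n m S i j) \/ (exists l, v = vZl l /\ 1 <= l <= k).
Proof.
  destruct v; unfold BSC; intros H; try lia.
  - left. exists i, j. split; auto.
    destruct (1 <=? i) eqn:E1; destruct (i <=? n) eqn:E2; destruct (1 <=? j) eqn:E3;
      destruct (j <=? m) eqn:E4; destruct (S j i) eqn:E5; simpl in H; try lia.
    apply Nat.leb_le in E1, E2, E3, E4. repeat split; auto.
  - right. exists l. split; auto.
    destruct (1 <=? l) eqn:E1; destruct (l <=? k) eqn:E2; simpl in H; try lia.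
    apply Nat.leb_le in E1, E2. lia.
Qed.

Variable C : list nat.
Hypothesis HC : NoDup C /\ length C = k /\ (forall t, In t C -> 1 <= t <= m) /\
    (forall i, 1 <= i <= n -> exists t, In t C /\ S t i = true).

Definition R := clos_refl_trans VSC (fun a b => arcH VSC (vertSC n m k S) (BSC n m k S) (Wf n S C) a b \/ arcH VSC (vertSC n m k S) (BSC n m k S) (Wf n S C) b a).

Lemma R_sym x y : R x y -> R y x.
Proof.
  induction 1.
  - apply rt_step. tauto.
  - apply rt_refl.
  - eapply rt_trans; eauto.
Qed.

Lemma chain v r : vertSC n m k S v -> r < BSC n m k S v ->
  forall L pre, Wf n S C v r = pre ++ L -> forall x y, In x L -> In y L -> R x y.
Proof.
  intros Hv Hr L. induction L as [|a L IH]; intros pre HL x y Hx Hy.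
  - destruct Hx.
  - destruct L as [|b L'].
    + destruct Hx as [<-|[]]; destruct Hy as [<-|[]]. apply rt_refl.
    + assert (Hab : R a b).
      { apply rt_step. left. exists v, r. split; auto. split; auto. exists pre, L'. auto. }
      assert (IH' : forall x y, In x (b :: L') -> In y (b :: L') -> R x y).
      { apply (IH (pre ++ [a])). rewrite HL, <- app_assoc. reflexivity. }
      destruct Hx as [<-|Hx]; destruct Hy as [<-|Hy].
      * apply rt_refl.
      * eapply rt_trans. exact Hab. apply IH'; simpl; auto.
      * eapply rt_trans. 2: apply R_sym; exact Hab. apply IH'; simpl; auto.
      * apply IH'; auto.
Qed.

Lemma same v r x y : vertSC n m k S v -> r < BSC n m k S v ->
  In x (Wf n S C v r) -> In y (Wf n S C v r) -> R x y.
Proof. intros. eapply (chain v r H H0 _ []); [reflexivity| |]; eauto. Qed.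

Lemma inC t : In t C -> exists l, 1 <= l <= k /\ nth (l-1) C 0 = t.
Proof.
  intros H. destruct (In_nth C t 0 H) as [p [Hp Hn]]. exists (Datatypes.S p).
  destruct HC as [_ [Hl _]]. split. lia. replace (Datatypes.S p - 1) with p by lia. auto.
Qed.

Lemma U_conn i : 1 <= i <= n -> R (vU i) vZ.
Proof.
  intros Hi. destruct HC as [_ [_ [HCm HCc]]]. destruct (HCc i Hi) as [t [Ht HSt]].
  destruct (inC t Ht) as [l [Hl Hn]].
  assert (HI : inI n m S i t) by (unfold inI; auto).
  apply rt_trans with (vV i t).
  - apply (same (vUij i t) 0); [simpl; auto | rewrite B_uij; auto | simpl; auto | simpl; tauto].
  - apply (same (vZl l) 0); [simpl; auto | rewrite B_zl; auto | | simpl; auto].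
    simpl. right. right. rewrite Hn. apply in_map_iff. exists i. split; auto.
    apply filter_In. split; auto. apply in_seq. lia.
Qed.

Lemma all_conn x : vertSC n m k S x -> R x vZ.
Proof.
  intros Hx.
  assert (Hij : forall i j y, inI n m S i j -> In y [vUij i j; vU i; vUp i j; vV i j; vVp i j] -> R y vZ).
  { intros i j y HI Hy. apply rt_trans with (vU i).
    - apply (same (vUij i j) 0); [simpl; auto | rewrite B_uij; auto | exact Hy | simpl; tauto].
    - apply U_conn. destruct HI; auto. }
  destruct x; simpl in Hx.
  - apply U_conn; auto.
  - apply (Hij i j); auto; simpl; tauto.
  - apply (Hij i j); auto; simpl; tauto.
  - apply (Hij i j); auto; simpl; tauto.
  - apply (Hij i j); auto; simpl; tauto.
  - apply rt_refl.
  - apply (same (vZl l) 0); [simpl; auto | rewrite B_zl; auto | simpl; auto | simpl; auto].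
Qed.
End Pf.

Theorem lemma5 (n m k : nat) (S : nat -> nat -> bool) :
  SC_instance n m k S ->
  set_cover_of_size n m k S ->
  ST_positive VSC (vertSC n m k S) (arcSC n m k S) FSC (BSC n m k S).
Proof.
  intros HSC [C HC]. exists (Wf n S C). split; [|split].
  - intros v r Hv Hr. destruct (B_pos n m k S v r Hr) as [[i [j [-> HI]]]|[l [-> Hl]]].
    + split; auto. destruct HI as [Hi [Hj Hs]].
      repeat constructor; simpl; unfold inI; auto; tauto.
    + split; auto. simpl. constructor. simpl; auto.
      destruct HC as [_ [Hlen [HCm _]]].
      assert (Ht : 1 <= nth (l-1) C 0 <= m).
      { apply HCm. apply nth_In. lia. }
      apply walkZ; auto. intros w Hw. destruct (S (nth (l-1) C 0) w) eqn:E; auto.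
      destruct HSC as [H1 _]. specialize (H1 _ _ Ht E). lia.
  - intros x Hx _. unfold inH.
    destruct HSC as [_ [Hcov Hk]].
    assert (Hij : forall i j, inI n m S i j -> In x [vUij i j; vU i; vUp i j; vV i j; vVp i j] -> exists v r, vertSC n m k S v /\ r < BSC n m k S v /\ In x (Wf n S C v r)).
    { intros i j HI Hin. exists (vUij i j), 0. rewrite B_uij; auto. }
    destruct x; simpl in Hx; try (eapply Hij; eauto; simpl; tauto).
    + destruct (Hcov i Hx) as [t [Ht Hs]]. apply (Hij i t). unfold inI; auto. simpl; auto.
    + exists (vZl 1), 0. rewrite B_zl by lia. split; [simpl; lia|split; [lia|simpl; auto]].
    + exists (vZl l), 0. rewrite B_zl by lia. split; [simpl; lia|split; [lia|simpl; auto]].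
  - intros x y Hx Hy _ _. pose proof (all_conn n m k S C HC).
    eapply rt_trans. apply H; auto. apply R_sym. auto. apply H; auto.
Qed.
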